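(* Suppose Assumption A and Assumption B (defined in the context) hold for the dynamic accuracy DFO algorithm described in the context, whose criticality parameter satisfies $\epsilon\in(0,1)$. Suppose $\|\nabla f(\theta^k)\|\ge\epsilon$ for all $k=0,\ldots,k_\epsilon$. Then for all $k\le k_\epsilon$, $$\Delta^k\ge\Delta_{\min}:=\gamma_{\rm dec}\min\left(\Delta^0,\frac{c_0\epsilon}{\kappa_{\rm eg}+1},\frac{\gamma_{\rm dec}\epsilon}{\kappa_{\rm eg}+1}\right)>0,$$ where $c_0:=\min\left(\frac{1-\eta_2-2\eta_1'}{4\kappa_{\rm ef}},\frac{1}{\kappa_H}\right)$.
   Context: Setting. Let $n,d\ge 1$ and $r=(r_1,\ldots,r_n):\mathbb{R}^d\to\mathbb{R}^n$, with objective $f(\theta)=\frac1n\|r(\theta)\|^2=\frac1n\sum_{i=1}^n r_i(\theta)^2$ (Euclidean norm). In the application, $r_i(\theta)=\|\hat x_i(\theta)-x_i\|$ where $\hat x_i(\theta)$ is the minimizer of a lower-level problem that can only be computed approximately. The algorithm never sees $r$ exactly: for any $\theta$ it can compute an approximation $\tilde r(\theta)$ (in the application $\tilde r_i(\theta)=\|\tilde x_i(\theta)-x_i\|$ with $\tilde x_i(\theta)$ an approximate minimizer whose error can be made as small as desired), and sets $\tilde f(\theta)=\frac1n\|\tilde r(\theta)\|^2$. We say $\tilde f(\theta)$ is evaluated with accuracy $\delta$ if $|\tilde f(\theta)-f(\theta)|\le\delta$. Models. At iteration $k$ the algorithm holds an iterate $\theta^k$, a radius $\Delta^k>0$ (here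 $\Delta^k$ denotes its value after the criticality and accuracy phases of iteration $k$), and interpolation points $z^0=\theta^k,z^1,\ldots,z^d\in\mathbb{R}^d$ with $z^1-\theta^k,\ldots,z^d-\theta^k$ linearly independent; $J^k\in\mathbb{R}^{n\times d}$ is the unique matrix with $\tilde r(\theta^k)+J^k(z^t-\theta^k)=\tilde r(z^t)$ for $t=1,\ldots,d$. Set $M^k(s)=\tilde r(\theta^k)+J^k s$ and $m^k(s)=\frac1n\|M^k(s)\|^2=\tilde f(\theta^k)+(g^k)^Ts+\frac12 s^TH^ks$ with $g^k=\frac2n (J^k)^T\tilde r(\theta^k)$, $H^k=\frac2n(J^k)^TJ^k$. Fixed constants $\kappa_{\rm ef},\kappa_{\rm eg}>0$ (independent of $k,\theta^k,\Delta^k$) are given, and $m^k$ is called fully linear in $B(\theta^k,\Delta^k)$ if $|f(\theta^k+s)-m^k(s)|\le\kappa_{\rm ef}(\Delta^k)^2$ and $\|\nabla f(\theta^k+s)-\nabla m^k(s)\|\le\kappa_{\rm eg}\Delta^k$ for all $\|s\|\le\Delta^k$. The algorithm has a procedure which, by replacing interpolation points, makes the model fully linear in a given ball. Algorithm. Parameters: $\Delta_{\max}>0$, $0<\gamma_{\rm dec}<1<\gamma_{\rm inc}$, $0<\eta_1\le\eta_2<1$, $0<\eta_1'<\min(\eta_1,1-\eta_2)/2$, $\epsilon>0$; inputs $\theta^0\in\mathbb{R}^d$, $0<\Delta^0\le\Delta_{\max}$. Build an initial model $m^0$ from an arbitrary interpolation set. For $k=0,1,2,\ldots$: (1) [accuracy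 phase] repeat: (a) except on the first pass, re-evaluate $\tilde f(\theta^k)$ with accuracy $\delta^k\le\eta_1'[m^k(0)-m^k(s^k)]$ using the $s^k$ from the previous pass; (b) [criticality phase] if $\|g^k\|\le\epsilon$, replace $\Delta^k$ by $\gamma_{\rm dec}^i\Delta^k$ for $i=0,1,2,\ldots$ (making the model fully linear in the current ball) until $m^k$ is fully linear in $B(\theta^k,\Delta^k)$ and $\Delta^k\le\|g^k\|$; (c) compute $s^k$ with $\|s^k\|\le\Delta^k$ approximately minimizing $m^k$ over that ball; until $\tilde f(\theta^k)$ has been evaluated with accuracy $\delta^k\le\eta_1'[m^k(0)-m^k(s^k)]$. (2) Evaluate $\tilde f(\theta^k+s^k)$ with accuracy $\delta^k_+\le\eta_1'[m^k(0)-m^k(s^k)]$ and set $\tilde\rho^k=\frac{\tilde f(\theta^k)-\tilde f(\theta^k+s^k)}{m^k(0)-m^k(s^k)}$. (3) Set $\theta^{k+1}=\theta^k+s^k$ if $\tilde\rho^k\ge\eta_2$, or if $\tilde\rho^k\ge\eta_1$ and $m^k$ is fully linear in $B(\theta^k,\Delta^k)$; otherwise $\theta^{k+1}=\theta^k$. Set $\Delta^{k+1}=\min(\gamma_{\rm inc}\Delta^k,\Delta_{\max})$ if $\tilde\rho^k\ge\eta_2$; $\Delta^{k+1}=\Delta^k$ if $\tilde\rho^k<\eta_2$ and $m^k$ is not fully linear in $B(\theta^k,\Delta^k)$; $\Delta^{k+1}=\gamma_{\rm dec}\Delta^k$ otherwise. (4) If $\theta^{k+1}=\theta^k+s^k$,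 form $m^{k+1}$ by adding $\theta^{k+1}$ to the interpolation set (removing an existing point); otherwise set $m^{k+1}=m^k$ if $m^k$ is fully linear in $B(\theta^k,\Delta^k)$, else form $m^{k+1}$ by making $m^k$ fully linear in $B(\theta^{k+1},\Delta^{k+1})$. Assumption A: the set $\mathcal{B}=\{z: \|z-\theta\|\le\Delta_{\max}\text{ for some }\theta\text{ with }f(\theta)\le f(\theta^0)\}$ is bounded, and $r$ is continuously differentiable on $\mathcal{B}$ with $\partial r$ Lipschitz continuous with constant $L_J$ on $\mathcal{B}$. Assumption B: for all $k$, $m^k(0)-m^k(s^k)\ge\frac12\|g^k\|\min\left(\Delta^k,\frac{\|g^k\|}{\|H^k\|+1}\right)$, and there is $\kappa_H\ge1$ with $\|H^k\|+1\le\kappa_H$ for all $k$. *)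

(* Defs.v *)
From mathcomp Require Import all_boot all_order all_algebra.
From mathcomp Require Import all_classical all_reals all_analysis.
Import Order.TTheory GRing.Theory Num.Theory.
Set Implicit Arguments. Unset Strict Implicit. Unset Printing Implicit Defensive.
Local Open Scope ring_scope.

Definition enorm (R : realType) (m : nat) (v : 'cV[R]_m) : R :=
  Num.sqrt (\sum_(i < m) (v i 0) ^+ 2).

(* Frobenius norm of a matrix (used only for the Lipschitz constant of the
   Jacobian in Assumption A; all norms are equivalent in finite dimension). *)
Definition fnorm (R : realType) (m p : nat) (A : 'M[R]_(m, p)) : R :=
  Num.sqrt (\sum_(i < m) \sum_(j < p) (A i j) ^+ 2).

Definition opnorm (R : realType) (m p : nat) (A : 'M[R]_(m, p)) : R :=
  sup [set y : R | exists v : 'cV[R]_p, enorm v <= 1 /\ y = enorm (A *m v)].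

Definition grad (R : realType) (d : nat) (F : 'cV[R]_d -> R) (x : 'cV[R]_d)
  : 'cV[R]_d := \col_(j < d) ('D_(delta_mx j 0) F x).

Definition jac (R : realType) (n d : nat) (r : 'cV[R]_d -> 'cV[R]_n)
  (x : 'cV[R]_d) : 'M[R]_(n, d) :=
  \matrix_(i < n, j < d) (('D_(delta_mx j 0) r x) i 0).

(* f(theta) = (1/n) ||r(theta)||^2 ; also used for ftilde from rtilde. *)
Definition sqobj (R : realType) (n : nat) (c : 'cV[R]_n) : R :=
  (n%:R)^-1 * enorm c ^+ 2.
Definition fobj (R : realType) (n d : nat) (r : 'cV[R]_d -> 'cV[R]_n)
  (th : 'cV[R]_d) : R := sqobj (r th).

(* The interpolation model.  c = rtilde(theta^k); the columns of Z are the
   interpolation points z^1..z^d and the columns of V the values rtilde(z^t).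
   When the displacements z^t - theta are linearly independent
   ((Z - theta 1^T) invertible), J below is the unique matrix with
   c + J (z^t - theta) = rtilde(z^t), t = 1..d. *)
Definition ones_row (R : realType) (d : nat) : 'rV[R]_d := const_mx 1.
Definition interp_ok (R : realType) (d : nat) (th : 'cV[R]_d) (Z : 'M[R]_d) :=
  (Z - th *m ones_row R d) \in unitmx.
Definition Jint (R : realType) (n d : nat) (th : 'cV[R]_d) (c : 'cV[R]_n)
  (Z : 'M[R]_d) (V : 'M[R]_(n, d)) : 'M[R]_(n, d) :=
  (V - c *m ones_row R d) *m invmx (Z - th *m ones_row R d).

Definition mval (R : realType) (n d : nat) (c : 'cV[R]_n) (J : 'M[R]_(n, d))
  (s : 'cV[R]_d) : R := sqobj (c + J *m s).
Definition gvec (R : realType) (n d : nat) (c : 'cV[R]_n) (J : 'M[R]_(n, d))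
  : 'cV[R]_d := (2 / n%:R) *: (J^T *m c).
Definition Hmat (R : realType) (n d : nat) (J : 'M[R]_(n, d)) : 'M[R]_d :=
  (2 / n%:R) *: (J^T *m J).
Definition mgrad (R : realType) (n d : nat) (c : 'cV[R]_n) (J : 'M[R]_(n, d))
  (s : 'cV[R]_d) : 'cV[R]_d := gvec c J + Hmat J *m s.

Definition fully_linear (R : realType) (n d : nat) (r : 'cV[R]_d -> 'cV[R]_n)
  (kef keg : R) (th : 'cV[R]_d) (D : R) (c : 'cV[R]_n) (J : 'M[R]_(n, d)) :=
  forall s : 'cV[R]_d, enorm s <= D ->
    `| fobj r (th + s) - mval c J s | <= kef * D ^+ 2 /\
    enorm (grad (fobj r) (th + s) - mgrad c J s) <= keg * D.

(* A trace (run) of the algorithm.  k = outer iteration, p = pass of the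
   accuracy-phase loop of iteration k, i = index of the criticality loop. *)
Record trace (R : realType) (n d : nat) := Trace {
  th : nat -> 'cV[R]_d;
  Dst : nat -> R;                    (* radius at the start of iteration k *)
  np : nat -> nat;                   (* number of passes of the accuracy loop *)
  cv : nat -> nat -> 'cV[R]_n;       (* rtilde(theta^k) in use during pass p *)
  acc : nat -> nat -> R;             (* accuracy with which ftilde(theta^k)
                                        has been evaluated, during pass p *)
  Z0 : nat -> nat -> 'M[R]_d;        (* interpolation points at start of pass p *)
  V0 : nat -> nat -> 'M[R]_(n, d);   (* their rtilde values *)
  ni : nat -> nat -> nat;            (* final i of the criticality loop *)
  Zc : nat -> nat -> nat -> 'M[R]_d; (* points after making the model fully
                                        linear in the ball of index i *)
  Vc : nat -> nat -> nat -> 'M[R]_(n, d);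
  st : nat -> nat -> 'cV[R]_d;       (* step s^k computed in pass p *)
  cplus : nat -> 'cV[R]_n;           (* rtilde(theta^k + s^k) *)
  accplus : nat -> R                 (* its accuracy delta^k_+ *)
}.

Section Derived.
Variables (R : realType) (n d : nat) (eps gdec : R) (tr : trace R n d).

Definition J0 k p := Jint (th tr k) (cv tr k p) (Z0 tr k p) (V0 tr k p).
Definition Jc k p i := Jint (th tr k) (cv tr k p) (Zc tr k p i) (Vc tr k p i).
Definition crit k p : bool := enorm (gvec (cv tr k p) (J0 k p)) <= eps.
Fixpoint Dafter k p : R :=
  let D := match p with 0 => Dst tr k | p'.+1 => Dafter k p' end in
  if crit k p then gdec ^+ (ni tr k p) * D else D.
Definition Din k p : R := match p with 0 => Dst tr k | p'.+1 => Dafter k p' end.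
(* model after criticality in pass p *)
Definition Zf k p := if crit k p then Zc tr k p (ni tr k p) else Z0 tr k p.
Definition Vf k p := if crit k p then Vc tr k p (ni tr k p) else V0 tr k p.
Definition Jf k p := Jint (th tr k) (cv tr k p) (Zf k p) (Vf k p).
Definition dec k p := mval (cv tr k p) (Jf k p) 0 - mval (cv tr k p) (Jf k p) (st tr k p).
Definition fp k := (np tr k).-1.
Definition Delta k := Dafter k (fp k).
Definition ck k := cv tr k (fp k).
Definition Jk k := Jf k (fp k).
Definition sk k := st tr k (fp k).
Definition deck k := dec k (fp k).
Definition rho k := (sqobj (ck k) - sqobj (cplus tr k)) / deck k.
End Derived.

Definition FLk (R : realType) (n d : nat) (r : 'cV[R]_d -> 'cV[R]_n)
  (kef keg eps gdec : R) (tr : trace R n d) (k : nat) : Prop :=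
  fully_linear r kef keg (th tr k) (Delta eps gdec tr k) (ck tr k) (Jk eps tr k).
Definition succ (R : realType) (n d : nat) (r : 'cV[R]_d -> 'cV[R]_n)
  (kef keg eta1 eta2 eps gdec : R) (tr : trace R n d) (k : nat) : Prop :=
  eta2 <= rho eps tr k \/ (eta1 <= rho eps tr k /\ FLk r kef keg eps gdec tr k).

Definition is_run (R : realType) (n d : nat) (r : 'cV[R]_d -> 'cV[R]_n)
  (kef keg Dmax gdec ginc eta1 eta2 eta1' eps : R) (th0 : 'cV[R]_d) (D0 : R)
  (tr : trace R n d) : Prop :=
  let FL := fully_linear r kef keg in
  [/\
   [/\ th tr 0 = th0, Dst tr 0 = D0 &
       (* initial model: arbitrary interpolation set *)
       interp_ok (th tr 0) (Z0 tr 0 0)],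
   forall k, (0 < np tr k)%N /\
   (forall p, (p < np tr k)%N ->
     [/\ `| sqobj (cv tr k p) - fobj r (th tr k) | <= acc tr k p,
         (* (a) re-evaluation on passes p > 0, model rebuilt with same points *)
         (0 < p)%N -> [/\ acc tr k p <= eta1' * dec eps tr k p.-1,
                         Z0 tr k p = Zf eps tr k p.-1 &
                         V0 tr k p = Vf eps tr k p.-1],
         crit eps tr k p ->
           [/\ forall i, (i <= ni tr k p)%N ->
                  interp_ok (th tr k) (Zc tr k p i) /\
                  FL (th tr k) (gdec ^+ i * Din eps gdec tr k p)
                     (cv tr k p) (Jc tr k p i),
               forall i, (i < ni tr k p)%N ->
                  ~ (gdec ^+ i * Din eps gdec tr k p
                       <= enorm (gvec (cv tr k p) (Jc tr k p i))) &
               gdec ^+ (ni tr k p) * Din eps gdec tr k p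
                 <= enorm (gvec (cv tr k p) (Jc tr k p (ni tr k p)))],
         enorm (st tr k p) <= Dafter eps gdec tr k p &
         (* loop exit test: exits at the first pass where it holds *)
         (acc tr k p <= eta1' * dec eps tr k p <-> p = fp tr k)]),
   forall k, `| sqobj (cplus tr k) - fobj r (th tr k + sk tr k) | <= accplus tr k
           /\ accplus tr k <= eta1' * deck eps tr k,
   forall k,
     let FLk := FLk r kef keg eps gdec tr k in
     let rk := rho eps tr k in
     let succk := succ r kef keg eta1 eta2 eps gdec tr k in
     [/\ succk -> th tr k.+1 = th tr k + sk tr k,
         ~ succk -> th tr k.+1 = th tr k,
         eta2 <= rk -> Dst tr k.+1 = Num.min (ginc * Delta eps gdec tr k) Dmax,
         rk < eta2 -> ~ FLk -> Dst tr k.+1 = Delta eps gdec tr k &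
         rk < eta2 -> FLk -> Dst tr k.+1 = gdec * Delta eps gdec tr k] &
   forall k,
     let FLk := FLk r kef keg eps gdec tr k in
     let succk := succ r kef keg eta1 eta2 eps gdec tr k in
     [/\ succk ->
           [/\ cv tr k.+1 0 = cplus tr k, acc tr k.+1 0 = accplus tr k,
               interp_ok (th tr k.+1) (Z0 tr k.+1 0) &
               exists j : 'I_(1 + d),
                 Z0 tr k.+1 0 = \matrix_(i < d, t < d)
                     (row_mx (th tr k) (Zf eps tr k (fp tr k))) i (lift j t) /\
                 V0 tr k.+1 0 = \matrix_(i < n, t < d)
                     (row_mx (ck tr k) (Vf eps tr k (fp tr k))) i (lift j t)],
         ~ succk -> FLk ->
           [/\ cv tr k.+1 0 = ck tr k, acc tr k.+1 0 = acc tr k (fp tr k),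
               Z0 tr k.+1 0 = Zf eps tr k (fp tr k) &
               V0 tr k.+1 0 = Vf eps tr k (fp tr k)] &
         ~ succk -> ~ FLk ->
           [/\ cv tr k.+1 0 = ck tr k, acc tr k.+1 0 = acc tr k (fp tr k),
               interp_ok (th tr k.+1) (Z0 tr k.+1 0) &
               FL (th tr k.+1) (Dst tr k.+1) (cv tr k.+1 0)
                  (Jint (th tr k.+1) (cv tr k.+1 0) (Z0 tr k.+1 0) (V0 tr k.+1 0))]]
  ].

Definition diffat (R : realType) (V W : normedModType R) (f : V -> W) (x : V) :=
  differentiable f x.

Definition Bset (R : realType) (n d : nat) (r : 'cV[R]_d -> 'cV[R]_n)
  (th0 : 'cV[R]_d) (Dmax : R) (z : 'cV[R]_d) : Prop :=
  exists th, fobj r th <= fobj r th0 /\ enorm (z - th) <= Dmax.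

Definition assumptionA (R : realType) (n d : nat) (r : 'cV[R]_d -> 'cV[R]_n)
  (th0 : 'cV[R]_d) (Dmax : R) : Prop :=
  (exists M : R, forall z, Bset r th0 Dmax z -> enorm z <= M) /\
  (forall z, Bset r th0 Dmax z -> @diffat R _ _ r z) /\
  (exists LJ : R, forall x y, Bset r th0 Dmax x -> Bset r th0 Dmax y ->
      fnorm (jac r x - jac r y) <= LJ * enorm (x - y)).

Definition assumptionB (R : realType) (n d : nat) (eps gdec kH : R)
  (tr : trace R n d) : Prop :=
  1 <= kH /\
  forall k p, (p < np tr k)%N ->
    let c := cv tr k p in let J := Jf eps tr k p in
    let g := enorm (gvec c J) in
    dec eps tr k p >= 2^-1 * g * Num.min (Dafter eps gdec tr k p)
                                     (g / (opnorm (Hmat J) + 1)) /\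
    opnorm (Hmat J) + 1 <= kH.

(* Main.v *)
Require Import Defs.
From mathcomp Require Import all_boot all_order all_algebra.
From mathcomp Require Import all_classical all_reals all_analysis.
From mathcomp Require Import lra ring.
Import Order.TTheory GRing.Theory Num.Theory.
Local Open Scope ring_scope.

Lemma cs_sum (R : realType) (m : nat) (a b : 'I_m -> R) :
  (\sum_i a i * b i) ^+ 2 <= (\sum_i a i ^+ 2) * (\sum_i b i ^+ 2).
Proof.
set A := \sum_i a i ^+ 2; set B := \sum_i b i ^+ 2; set C := \sum_i a i * b i.
have B0 : 0 <= B by apply: sumr_ge0 => i _; exact: sqr_ge0.
have A0 : 0 <= A by apply: sumr_ge0 => i _; exact: sqr_ge0.
have [Bz|Bp] := eqVneq B 0.
  have hb : forall i, b i = 0.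
    move=> i; apply/eqP; rewrite -sqrf_eq0; apply/eqP.
    by apply: (psumr_eq0P (P := predT) (F := fun i => b i ^+ 2)) => // j _; exact: sqr_ge0.
  have -> : C = 0 by rewrite /C big1 // => i _; rewrite hb mulr0.
  by rewrite Bz expr0n /= mulr0.
have Bpos : 0 < B by rewrite lt_def Bp B0.
have H : 0 <= \sum_i (B * a i - C * b i) ^+ 2 by apply: sumr_ge0 => i _; exact: sqr_ge0.
have E : \sum_i (B * a i - C * b i) ^+ 2 = B ^+ 2 * A - 2 * B * C * C + C ^+ 2 * B.
  rewrite (eq_bigr (fun i => B ^+ 2 * a i ^+ 2 - (2 * B * C) * (a i * b i) + C ^+ 2 * b i ^+ 2)); last by move=> i _; ring.
  by rewrite !big_split /= sumrN -!mulr_sumr.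
rewrite E in H.
nra.
Qed.

Lemma minkowski (R : realType) (m : nat) (u v : 'cV[R]_m) :
  enorm u <= enorm (u - v) + enorm v.
Proof.
rewrite /enorm.
set A := \sum_i (u - v) i 0 ^+ 2; set B := \sum_i v i 0 ^+ 2.
have A0 : 0 <= A by apply: sumr_ge0 => i _; exact: sqr_ge0.
have B0 : 0 <= B by apply: sumr_ge0 => i _; exact: sqr_ge0.
have hcs := @cs_sum R m (fun i => (u - v) i 0) (fun i => v i 0).
rewrite -/A -/B in hcs.
set C := \sum_i (u - v) i 0 * v i 0 in hcs.
have HC : C <= Num.sqrt A * Num.sqrt B.
  rewrite -sqrtrM // (le_trans (ler_norm C)) // -sqrtr_sqr ler_sqrt //.
  exact: mulr_ge0.
have E : \sum_i u i 0 ^+ 2 = A + 2 * C + B.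
  rewrite /A /B /C mulr_sumr -!big_split /=; apply: eq_bigr => i _.
  rewrite !mxE; ring.
have SS : 0 <= Num.sqrt A + Num.sqrt B by rewrite addr_ge0 ?sqrtr_ge0.
rewrite E; apply: (le_trans (y := Num.sqrt ((Num.sqrt A + Num.sqrt B) ^+ 2))); last first.
  by rewrite sqrtr_sqr ger0_norm.
rewrite ler_sqrt; last exact: sqr_ge0.
rewrite sqrrD !sqr_sqrtr //.
lra.
Qed.

Lemma enorm0 (R : realType) (m : nat) : enorm (0 : 'cV[R]_m) = 0.
Proof. by rewrite /enorm big1 ?sqrtr0 // => i _; rewrite mxE expr0n. Qed.

Lemma opnorm_ge0 (R : realType) (m p : nat) (A : 'M[R]_(m, p)) : 0 <= opnorm A.
Proof.
rewrite /opnorm.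
set S := (X in sup X).
have S0 : S 0 by exists 0; rewrite enorm0 mulmx0 enorm0; split.
case: (pselect (has_sup S)) => h.
  exact: (sup_upper_bound h S0).
by rewrite sup_out.
Qed.

Theorem lemma8 (R : realType) (n d : nat) (r : 'cV[R]_d -> 'cV[R]_n)
  (kef keg kH Dmax gdec ginc eta1 eta2 eta1' eps : R)
  (th0 : 'cV[R]_d) (D0 : R) (tr : trace R n d) (keps : nat) :
  (0 < n)%N -> (0 < d)%N ->
  0 < kef -> 0 < keg ->
  0 < Dmax -> 0 < gdec -> gdec < 1 -> 1 < ginc ->
  0 < eta1 -> eta1 <= eta2 -> eta2 < 1 ->
  0 < eta1' -> eta1' < Num.min eta1 (1 - eta2) / 2 ->
  0 < eps -> eps < 1 ->
  0 < D0 -> D0 <= Dmax ->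
  is_run r kef keg Dmax gdec ginc eta1 eta2 eta1' eps th0 D0 tr ->
  assumptionA r th0 Dmax ->
  assumptionB eps gdec kH tr ->
  (forall k, (k <= keps)%N -> eps <= enorm (grad (fobj r) (th tr k))) ->
  let c0 := Num.min ((1 - eta2 - 2 * eta1') / (4 * kef)) (1 / kH) in
  let Dmin := gdec * Num.min D0 (Num.min (c0 * eps / (keg + 1))
                                         (gdec * eps / (keg + 1))) in
  (forall k, (k <= keps)%N -> Dmin <= Delta eps gdec tr k) /\ 0 < Dmin.
Proof.
move=> n0 d0 kef0 keg0 Dmax0 g0 g1 ginc1 e10 e12 e21 e1'0 e1'lt eps0 eps1 D00 D0max
  Hrun _ HB Hgrad c0 Dmin.
case: HB => kH1 HB.
case: Hrun => [[Hth0 HD0 _] Hacc Hs2 Hs3 _].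
have e1'b : eta1' < (1 - eta2) / 2.
  apply: (lt_le_trans e1'lt); apply: ler_wpM2r; first by rewrite invr_ge0.
  by rewrite ge_min lexx orbT.
set K := keg + 1.
have K0 : 0 < K by rewrite /K; lra.
set a := 1 - eta2 - 2 * eta1'.
have a0 : 0 < a by rewrite /a; lra.
have kH0 : 0 < kH by lra.
have c0a : c0 * (4 * kef) <= a.
  rewrite -ler_pdivlMr; last by rewrite mulr_gt0.
  by rewrite /c0 ge_min lexx.
have c0H : c0 <= kH^-1 by rewrite /c0 ge_min div1r lexx orbT.
have c0pos : 0 < c0.
  by rewrite /c0 lt_min divr_gt0 ?mulr_gt0 ?div1r ?invr_gt0.
have c01 : c0 <= 1.
  by apply: (le_trans c0H); rewrite invf_le1.
have Hfp : forall k, (fp tr k < np tr k)%N.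
  by move=> k; rewrite /fp ltn_predL; case: (Hacc k).
have Hcrit : forall k, 0 < Dst tr k -> eps <= enorm (grad (fobj r) (th tr k)) ->
    forall p, (p < np tr k)%N ->
    Num.min (Dst tr k) (gdec * eps / K) <= Dafter eps gdec tr k p.
  move=> k Dpos Hg.
  set X := Num.min (Dst tr k) (gdec * eps / K).
  have Xpos : 0 < X by rewrite /X lt_min Dpos /= divr_gt0 // mulr_gt0.
  have step : forall p, (p < np tr k)%N -> X <= Din eps gdec tr k p ->
      X <= Dafter eps gdec tr k p.
    move=> p Hp HX.
    have Deq : Dafter eps gdec tr k p = if crit eps tr k p
        then gdec ^+ ni tr k p * Din eps gdec tr k p else Din eps gdec tr k p.
      by case: (p).
    rewrite Deq.
    case Hc: (crit eps tr k p); last done.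
    have [_ _ Hb _ _] := (Hacc k).2 p Hp.
    have [HFL Hnot Hend] := Hb Hc.
    have Dinpos : 0 < Din eps gdec tr k p by exact: lt_le_trans Xpos HX.
    case Hni: (ni tr k p) => [|i]; first by rewrite expr0 mul1r.
    have [_ HFLi] := HFL i (ltac:(by rewrite Hni leqnSn)).
    have Hlt0 := Hnot i (ltac:(by rewrite Hni ltnSn)).
    set Y := gdec ^+ i * Din eps gdec tr k p in HFLi Hlt0.
    have Y0 : 0 < Y by rewrite /Y mulr_gt0 // exprn_gt0.
    set gg := enorm (gvec (cv tr k p) (Jc tr k p i)) in Hlt0.
    have Hlt : gg < Y by rewrite ltNge; apply/negP.
    have [_ Hgr] := HFLi 0 (ltac:(by rewrite enorm0 ltW)).
    rewrite addr0 /mgrad mulmx0 addr0 in Hgr.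
    have Hm := @minkowski R d (grad (fobj r) (th tr k)) (gvec (cv tr k p) (Jc tr k p i)).
    rewrite -/gg in Hm.
    have HeY : eps <= Y * K by rewrite /K; lra.
    rewrite exprS -mulrA -/Y.
    apply: (le_trans (y := gdec * eps / K)); first by rewrite /X ge_min lexx orbT.
    by rewrite -mulrA ler_pM2l // ler_pdivrMr.
  elim=> [|p IH] Hp; apply: step => //.
    by rewrite /X /= ge_min lexx.
  exact: (IH (ltnW Hp)).
have Hrho : forall k, FLk r kef keg eps gdec tr k -> 0 < Delta eps gdec tr k ->
    Delta eps gdec tr k <= c0 * enorm (gvec (ck tr k) (Jk eps tr k)) ->
    eta2 <= rho eps tr k.
  move=> k HFL Dpos Dle.
  have [HBd HBk] := HB k (fp tr k) (Hfp k).
  set g := enorm (gvec (ck tr k) (Jk eps tr k)) in Dle.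
  set D := Delta eps gdec tr k in Dpos Dle HFL.
  set oH := opnorm (Hmat (Jk eps tr k)).
  have HBd' : 2^-1 * g * Num.min D (g / (oH + 1)) <= deck eps tr k := HBd.
  have HBk' : oH + 1 <= kH := HBk.
  have oH0 : 0 <= oH := @opnorm_ge0 _ _ _ _.
  have g0' : 0 <= g := sqrtr_ge0 _.
  have Hmin : Num.min D (g / (oH + 1)) = D.
    apply/min_idPl.
    apply: (le_trans Dle).
    rewrite mulrC ler_wpM2l //.
    apply: (le_trans c0H).
    by rewrite lef_pV2 // posrE; lra.
  rewrite Hmin in HBd'.
  set dk := deck eps tr k in HBd'.
  have Hsk : enorm (sk tr k) <= D.
    by have [_ _ _ Hc _] := (Hacc k).2 (fp tr k) (Hfp k).
  have [Hf _] := HFL (sk tr k) Hsk.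
  have [Hp1 Hp2] := Hs2 k.
  have Hdk : dk = sqobj (ck tr k) - mval (ck tr k) (Jk eps tr k) (sk tr k).
    by rewrite /dk /deck /dec /mval mulmx0 addr0.
  have h1 : kef * D ^+ 2 <= kef * D * (c0 * g).
    by rewrite expr2 mulrA ler_wpM2l // mulr_ge0 // ltW.
  have h2 : kef * D * (c0 * g) <= a / 2 * dk.
    have P1 : (c0 * (4 * kef)) * (g * D) <= a * (g * D).
      by rewrite ler_wpM2r // mulr_ge0 // ltW.
    have P2 : a * (2^-1 * g * D) <= a * dk by rewrite ler_wpM2l // ltW.
    lra.
  have dkpos : 0 < dk.
    apply: (lt_le_trans _ HBd').
    have gpos : 0 < g.
      have : 0 < c0 * g by exact: lt_le_trans Dpos Dle.
      by rewrite pmulr_rgt0.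
    by rewrite !mulr_gt0 // invr_gt0.
  rewrite /rho -/dk ler_pdivlMr //.
  move: Hf Hp1; rewrite !ler_norml => /andP[Hf1 Hf2] /andP[Hq1 Hq2].
  have P3 : 0 <= (1 - eta2) * dk by rewrite mulr_ge0 // ?ltW //; lra.
  rewrite /a in h2.
  rewrite -/D in Hf1 Hf2; rewrite -/dk in Hp2.
  lra.
set T := Num.min D0 (Num.min (c0 * eps / K) (gdec * eps / K)).
have Tpos : 0 < T by rewrite /T !lt_min D00 /= !divr_gt0 // mulr_gt0.
have TD0 : T <= D0 by rewrite /T ge_min lexx.
have Tc : T <= c0 * eps / K by rewrite /T !ge_min lexx orbT.
have Tg : T <= gdec * eps / K by rewrite /T !ge_min lexx !orbT.
have gT : gdec * T <= T by rewrite ger_pMl //; lra.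
have gTpos : 0 < gdec * T by rewrite mulr_gt0.
have HDelta : forall k, (k <= keps)%N -> gdec * T <= Dst tr k ->
    gdec * T <= Delta eps gdec tr k.
  move=> k Hk HD.
  apply: (le_trans _ (Hcrit k (lt_le_trans gTpos HD) (Hgrad k Hk) (fp tr k) (Hfp k))).
  by rewrite le_min HD /= (le_trans gT Tg).
have Hmain : forall k, (k <= keps)%N -> gdec * T <= Dst tr k.
  elim=> [|k IH] Hk; first by rewrite HD0 (le_trans gT TD0).
  have Hk' : (k <= keps)%N by exact: ltnW.
  have HDk := HDelta k Hk' (IH Hk').
  have Dkpos : 0 < Delta eps gdec tr k := lt_le_trans gTpos HDk.
  have [S1 S2 S3 S4 S5] := Hs3 k.
  have [Hr|Hr] := leP eta2 (rho eps tr k).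
    rewrite S3 // le_min; apply/andP; split.
      by apply: (le_trans HDk); rewrite ler_pMl // ltW.
    by apply: (le_trans gT); apply: (le_trans TD0).
  case: (pselect (FLk r kef keg eps gdec tr k)) => HF; last by rewrite S4.
  rewrite S5 //.
  have Hbig : c0 * eps / K < Delta eps gdec tr k.
    rewrite ltNge; apply/negP => Hsmall.
    have : eta2 <= rho eps tr k.
      apply: Hrho => //.
      have [_ Hgr] := HF 0 (ltac:(by rewrite enorm0 ltW)).
      rewrite addr0 /mgrad mulmx0 addr0 in Hgr.
      have Hm := @minkowski R d (grad (fobj r) (th tr k)) (gvec (ck tr k) (Jk eps tr k)).
      have He := Hgrad k Hk'.
      set g := enorm (gvec (ck tr k) (Jk eps tr k)) in Hm *.
      set D := Delta eps gdec tr k in Hsmall Hgr Dkpos *.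
      have h1 : D * K <= c0 * eps by rewrite -ler_pdivlMr.
      have h2 : c0 * (keg * D) <= keg * D.
        by rewrite ger_pMl // mulr_gt0.
      have h3 : c0 * eps <= c0 * (g + keg * D).
        by apply: ler_wpM2l; [exact: ltW | lra].
      rewrite /K in h1; lra.
    by rewrite leNgt Hr.
  by rewrite ler_pM2l //; exact: (le_trans Tc (ltW Hbig)).
split.
  by move=> k Hk; exact: HDelta k Hk (Hmain k Hk).
by [].
Qed.
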